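(* Let $a,b\in\mathbb{C}$ and let $m,n\ge 0$ be integers. Define $S_n(a,b,m)=\sum_{k=0}^n\binom{n}{k}a^kb^{n-k}H_k(m)$. Then $$S_n(a,b,m)=\sum_{j=0}^m\binom{m}{j}\sum_{k=0}^n H_k(j)\,(a+b)^k\,\frac{(m-j)!}{(n-k)!}\,(-1)^{n-k}\,b^{n-k}\,s(n-k,m-j).$$
   Context: For integers $m\ge 1$, $n\ge 0$, the multiple harmonic-like numbers are $H_n(m)=\sum_{1\le k_1+k_2+\cdots+k_m\le n}\frac{1}{k_1k_2\cdots k_m}$ (sum over positive integers $k_1,\dots,k_m$), with $H_n(0)=1$ for $n\ge 0$ and $H_0(m)=0$ for $m\ge1$. Equivalently, $\sum_{n\ge0}H_n(m)z^n=\frac{(-\ln(1-z))^m}{1-z}$. The (signed) Stirling numbers of the first kind $s(n,k)$ are defined by $\sum_{n\ge k}s(n,k)\frac{z^n}{n!}=\frac{\ln^k(1+z)}{k!}$, with $s(n,k)=0$ for $n<k$. Convention $0^0=1$. *)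

(* Defs.v *)
From HB Require Import structures.
From mathcomp Require Import all_boot all_order all_algebra.
Set Implicit Arguments. Unset Strict Implicit. Unset Printing Implicit Defensive.
Import Order.TTheory GRing.Theory Num.Theory.
Local Open Scope ring_scope.

(* Each k_i lies in 'I_(n.+1) (since k_i <= n).  For m = 0 the
   only tuple is the empty one, giving H_n(0) = 1; for n = 0, m >= 1 the sum is
   empty, giving H_0(m) = 0, as in the paper's conventions. *)
Definition Hmult (F : fieldType) (n m : nat) : F :=
  \sum_(k : {ffun 'I_m -> 'I_n.+1} |
          [forall i, (0 < k i)%N] && (\sum_i (k i : nat) <= n)%N)
     (\prod_i ((k i : nat)%:R : F))^-1.

(* Signed Stirling numbers of the first kind s(n,k), via the standard
   recurrence s(n+1,k+1) = s(n,k) - n s(n,k+1), s(0,0)=1,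
   s(0,k+1) = 0, s(n+1,0) = 0, equivalent to sum_n s(n,k) z^n/n! = ln^k(1+z)/k!. *)
Fixpoint stirling1 (n k : nat) : int :=
  match n, k with
  | 0, 0 => 1
  | 0, _.+1 => 0
  | _.+1, 0 => 0
  | n'.+1, k'.+1 => stirling1 n' k' - (n'%:Z) * stirling1 n' k'.+1
  end.

Definition Ssum (F : fieldType) (n : nat) (a b : F) (m : nat) : F :=
  \sum_(k < n.+1) ('C(n, k))%:R * a ^+ k * b ^+ (n - k) * Hmult F k m.

(* Main.v *)
Require Import Defs.
From HB Require Import structures.
From mathcomp Require Import all_boot all_order all_algebra.
From mathcomp Require Import ring.
Import Order.TTheory GRing.Theory Num.Theory.
Set Implicit Arguments. Unset Strict Implicit. Unset Printing Implicit Defensive.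
Local Open Scope ring_scope.



Definition zz (F : numFieldType) (M : nat) (p : {poly F}) :=
  forall i, (i < M)%N -> p`_i = 0.

Lemma zz0 (F : numFieldType) M : zz M (0 : {poly F}).
Proof. by move=> i _; rewrite coef0. Qed.

Lemma zzD (F : numFieldType) M (p q : {poly F}) : zz M p -> zz M q -> zz M (p + q).
Proof. by move=> hp hq i hi; rewrite coefD hp // hq // addr0. Qed.

Lemma zzN (F : numFieldType) M (p : {poly F}) : zz M p -> zz M (- p).
Proof. by move=> hp i hi; rewrite coefN hp // oppr0. Qed.

Lemma zzB (F : numFieldType) M (p q : {poly F}) : zz M p -> zz M q -> zz M (p - q).
Proof. by move=> hp hq; apply: zzD => //; apply: zzN. Qed.

Lemma zzMl (F : numFieldType) M (p q : {poly F}) : zz M q -> zz M (p * q).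
Proof.
move=> hq i hi; rewrite coefM big1 // => j _; rewrite hq ?mulr0 //.
by apply: leq_ltn_trans hi; apply: leq_subr.
Qed.

Lemma zzMr (F : numFieldType) M (p q : {poly F}) : zz M p -> zz M (p * q).
Proof. by move=> hp; rewrite mulrC; apply: zzMl. Qed.

Lemma zzXn (F : numFieldType) M K (p : {poly F}) : (M <= K)%N -> zz M ('X^K * p).
Proof. by move=> hMK i hi; rewrite coefXnM (leq_trans hi hMK). Qed.

Lemma zz_le (F : numFieldType) M K (p : {poly F}) : (M <= K)%N -> zz K p -> zz M p.
Proof. by move=> hMK hp i hi; apply: hp; apply: leq_trans hMK. Qed.

Lemma zzXexp (F : numFieldType) M (v : {poly F}) : zz M (('X * v) ^+ M).
Proof. by rewrite exprMn; apply: zzXn. Qed.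

Lemma zz_deriv (F : numFieldType) M (p : {poly F}) : zz M.+1 p -> zz M p^`().
Proof. by move=> hp i hi; rewrite coef_deriv hp // mul0rn. Qed.

Lemma zz_antideriv (F : numFieldType) M (p : {poly F}) :
  p`_0 = 0 -> zz M p^`() -> zz M.+1 p.
Proof.
move=> h0 hd [|i] hi //; have := hd i hi; rewrite coef_deriv.
by move/eqP; rewrite mulrn_eq0 /= => /eqP.
Qed.

Lemma zz_mul_diff (F : numFieldType) M (p1 p2 q1 q2 : {poly F}) :
  zz M (p1 - q1) -> zz M (p2 - q2) -> zz M (p1 * p2 - q1 * q2).
Proof.
move=> h1 h2; have -> : p1 * p2 - q1 * q2 = (p1 - q1) * p2 + q1 * (p2 - q2) by ring.
by apply: zzD; [apply: zzMr | apply: zzMl].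
Qed.

Lemma zz_exp_diff (F : numFieldType) M (p q : {poly F}) k :
  zz M (p - q) -> zz M (p ^+ k - q ^+ k).
Proof.
move=> h; elim: k => [|k IH]; first by rewrite !expr0 subrr; apply: zz0.
by rewrite !exprS; apply: zz_mul_diff.
Qed.



Definition gp (F : numFieldType) (x : F) (M : nat) : {poly F} := \poly_(i < M) x ^+ i.
Definition lp (F : numFieldType) (N : nat) : {poly F} := \poly_(i < N.+1) (i%:R)^-1.

Lemma gpS (F : numFieldType) (x : F) M : gp x M.+1 = gp x M + (x%:P * 'X) ^+ M.
Proof.
rewrite /gp !poly_def big_ord_recr /=; congr (_ + _).
by rewrite exprMn -polyC_exp mul_polyC.
Qed.

Lemma gp_rel (F : numFieldType) (x : F) M :
  (1 - x%:P * 'X) * gp x M = 1 - (x%:P * 'X) ^+ M.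
Proof.
elim: M => [|M IH]; first by rewrite /gp poly_def big_ord0 mulr0 expr0 subrr.
rewrite gpS mulrDr IH exprS; ring.
Qed.

Lemma coef_scale (F : numFieldType) (x : F) (p : {poly F}) i :
  (p \Po (x%:P * 'X))`_i = x ^+ i * p`_i.
Proof.
elim/poly_ind: p i => [|p c IH] i; first by rewrite comp_poly0 !coef0 mulr0.
rewrite comp_poly_MXaddC !coefD !coefC coefMX.
rewrite mulrA coefMX coefMC.
case: i => [|i] /=; first by rewrite expr0 mul1r add0r.
rewrite IH exprS !addr0; ring.
Qed.

Lemma coef_gp (F : numFieldType) (x : F) M i : (gp x M)`_i = if (i < M)%N then x ^+ i else 0.
Proof. by rewrite coef_poly. Qed.

Lemma coef_lp (F : numFieldType) N i : (lp F N)`_i = if (i < N.+1)%N then (i%:R)^-1 else 0.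
Proof. by rewrite coef_poly. Qed.

Lemma lp0 (F : numFieldType) N : (lp F N)`_0 = 0.
Proof. by rewrite coef_lp /= invr0. Qed.

Lemma deriv_lp (F : numFieldType) N : (lp F N)^`() = gp 1 N.
Proof.
apply/polyP => i; rewrite coef_deriv coef_lp coef_gp ltnS expr1n.
case: ifP => _; last by rewrite mul0rn.
by rewrite -(mulr_natr (i.+1%:R^-1)) mulVf ?pnatr_eq0.
Qed.



Lemma H_coef (F : numFieldType) k j : Hmult F k j = (lp F k ^+ j * gp 1 k.+1)`_k.
Proof.
rewrite /Hmult.
have -> : lp F k ^+ j = \prod_(i : 'I_j) \sum_(t : 'I_k.+1) ((t : nat)%:R^-1 *: 'X^t).
  by rewrite prodr_const card_ord /lp poly_def.
rewrite bigA_distr_bigA mulr_suml coef_sum big_mkcond /=.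
apply: eq_bigr => f _.
have -> : \prod_i (((f i : nat)%:R : F)^-1 *: 'X^(f i)) =
   (\prod_i ((f i : nat)%:R : F)^-1) *: 'X^(\sum_i (f i : nat)).
  rewrite -prodrXr -mul_polyC rmorph_prod -big_split /=.
  by apply: eq_bigr => i _; rewrite mul_polyC.
rewrite -scalerAl coefZ coefXnM coef_gp prodfV.
have [hs|hs] := leqP (\sum_i (f i : nat)) k; last first.
  by rewrite andbF /= mulr0.
rewrite /= ltnS leq_subr expr1n mulr1.
rewrite andbT; case: ifP => // /negbT /forallPn [i]; rewrite lt0n negbK => /eqP hi.
by rewrite (bigD1 i) //= hi mul0r invr0.
Qed.



Lemma H_coefN (F : numFieldType) N k j : (k <= N)%N ->
  (lp F N ^+ j * gp 1 N.+1)`_k = Hmult F k j.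
Proof.
move=> hk; rewrite H_coef; apply/eqP; rewrite -subr_eq0 -coefB; apply/eqP.
apply: (zz_mul_diff (M := k.+1)) => //; first apply: zz_exp_diff.
  move=> i hi; rewrite coefB !coef_lp hi (leq_trans hi) ?subrr //.
move=> i hi; rewrite coefB !coef_gp hi (leq_trans hi) ?subrr //.
Qed.

Lemma stir_key (F : numFieldType) N q r : (r < N)%N ->
  ((- lp F N) ^+ q.+1)`_r.+1 *+ r.+1 - ((- lp F N) ^+ q.+1)`_r *+ r
  = - (((- lp F N) ^+ q)`_r *+ q.+1).
Proof.
move=> hr.
set P := (- lp F N) ^+ q.+1.
have hg := gp_rel (1 : F) N; rewrite polyC1 mul1r in hg.
have E : (1 - 'X) * P^`() = - (((1 - 'X^N) * (- lp F N) ^+ q) *+ q.+1).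
  rewrite /P deriv_exp derivN deriv_lp /= -hg; ring.
move: E => /(congr1 (fun p : {poly F} => p`_r)); rewrite /= mulrBl mul1r coefB coefXM.
rewrite coefN coefMn mulrBl mul1r coefB coefXnM hr subr0 !coef_deriv.
by case: r hr => [|r] hr /=; rewrite ?mulr0n ?subr0.
Qed.

Lemma stir (F : numFieldType) N r p : (r <= N)%N ->
  ((- lp F N) ^+ p)`_r = (-1) ^+ r * ((p`!)%:R / (r`!)%:R) * (stirling1 r p)%:~R.
Proof.
elim: r p => [|r IH] p hr.
  rewrite -horner_coef0 horner_exp hornerN horner_coef0 lp0 oppr0 expr0n.
  by case: p => [|p] /=; rewrite ?mulr0 // fact0 expr0 divr1 !mul1r rmorph1.
case: p => [|q].
  by rewrite expr0 coefC /= mulr0.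
have hr' : (r < N)%N by [].
have K := @stir_key F N q r hr'.
rewrite !IH ?(ltnW hr) // in K.
have nz : (r.+1%:R : F) != 0 by rewrite pnatr_eq0.
have nzf : ((r`!)%:R : F) != 0 by rewrite pnatr_eq0 -lt0n fact_gt0.
apply: (mulfI nz); rewrite [LHS]mulr_natl.
move/eqP: K; rewrite subr_eq => /eqP ->.
have -> : stirling1 r.+1 q.+1 = stirling1 r q - r%:Z * stirling1 r q.+1 by [].
rewrite intrB intrM (factS q) (factS r) !natrM exprS.
set s1 := (stirling1 r q)%:~R; set s2 := (stirling1 r q.+1)%:~R.
have -> : (r%:Z)%:~R = (r%:R : F) by [].
set fq := (q`!)%:R; set fr := (r`!)%:R in nzf *.
field; apply/andP; split; [exact: nzf | by rewrite addrC natr1 pnatr_eq0].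
Qed.



Lemma hockey i r : (\sum_(j < r.+1) 'C(j + i, i) = 'C(r + i.+1, i.+1))%N.
Proof.
elim: r => [|r IH]; first by rewrite big_ord1 add0n binn add0n binn.
rewrite big_ord_recr /= IH [in RHS]addSn binS; by rewrite addnS addSn.

Qed.

Lemma gb_pow (F : numFieldType) (b : F) N i r : (r <= N)%N ->
  ((gp b N.+1) ^+ i.+1)`_r = ('C(r + i, i))%:R * b ^+ r.
Proof.
elim: i r => [|i IH] r hr.
  by rewrite expr1 coef_gp ltnS hr addn0 bin0 mul1r.
rewrite exprS mulrC coefM.
rewrite (eq_bigr (fun j : 'I_r.+1 => ('C(j + i, i))%:R * b ^+ r)); last first.
  move=> j _; have hj : (j <= r)%N by rewrite -ltnS.
  rewrite IH ?(leq_trans hj hr) // coef_gp ltnS (leq_trans (leq_subr _ _) hr).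
  by rewrite -mulrA -exprD subnKC.
by rewrite -mulr_suml -natr_sum hockey addnS.
Qed.



Lemma identB (R : comNzRingType) (u gb gc A B Xv W Eb Ec : R) :
  W = 1 - (1 - A * Xv * gb) * u ->
  Eb = 1 - (1 - B * Xv) * gb ->
  Ec = 1 - (1 - (A + B) * Xv) * gc ->
  u * gb - gc = gc * (- W - Eb + W * Eb - u * gb * A * Xv * Eb) + Ec * u * gb.
Proof. by move=> -> -> ->; ring. Qed.

Lemma identA (R : comNzRingType) (v gb d hc hb A B Xv W Eb Ebd Fc Fb : R) :
  W = 1 - (1 - A * Xv * gb) * v ->
  Eb = 1 - (1 - B * Xv) * gb ->
  Ebd = B * gb - (1 - B * Xv) * d ->
  Fc = 1 - (1 - (A + B) * Xv) * hc ->
  Fb = 1 - (1 - B * Xv) * hb ->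
  v * (A * gb + A * Xv * d) - (hc * (A + B) - hb * B) =
  (v * (A * gb + A * Xv * d) - (hc * (A + B) - hb * B)) * (Fc + Fb - Fc * Fb) + hc * hb *
   (A * (- W - Eb - Xv * (1 - B * Xv) * Ebd + W * Eb + W * Xv * (1 - B * Xv) * Ebd)
    - A * A * Xv * Eb * (1 - B * Xv) * v * (gb + Xv * d)
    + (A + B) * (1 - B * Xv) * Fc - B * (1 - (A + B) * Xv) * Fb).
Proof. by move=> -> -> -> -> ->; ring. Qed.



Lemma gp_comp (F : numFieldType) (q : {poly F}) M :
  (1 - q) * (gp 1 M \Po q) = 1 - q ^+ M.
Proof.
have c1 : (1 : {poly F}) \Po q = 1 by rewrite -polyC1 comp_polyC.
have := gp_rel (1 : F) M; rewrite polyC1 mul1r => /(congr1 (fun p => p \Po q)) /=.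
by rewrite comp_polyM !comp_polyB c1 comp_polyX comp_Xn_poly.
Qed.

Lemma zz_conv (F : numFieldType) M (p q : {poly F}) : p = q -> zz M q -> zz M p.
Proof. by move=> ->. Qed.

Ltac zzt := first [ assumption
 | apply: zzD; zzt | apply: zzB; zzt | apply: zzN; zzt
 | apply: zzMl; zzt | apply: zzMr; zzt ].

Lemma main_zz (F : numFieldType) (a b : F) m N :
  zz N.+1 ((lp F N \Po (a%:P * 'X * gp b N.+1)) ^+ m
            * ((gp 1 N.+1 \Po (a%:P * 'X * gp b N.+1)) * gp b N.+1)
     - ((lp F N \Po ((a + b)%:P * 'X)) - (lp F N \Po (b%:P * 'X))) ^+ m * gp (a + b) N.+1).
Proof.
have r3 := gp_rel (a + b) N.+1; rewrite polyCD in r3 *.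
have r2 := gp_rel b N.+1.
have ew : a%:P * 'X * gp b N.+1 = 'X * (a%:P * gp b N.+1) by ring.
have eb : b%:P * 'X = 'X * b%:P by ring.
have ec : (a%:P + b%:P) * 'X = 'X * (a%:P + b%:P) by ring.
have zW : forall M, zz M ((a%:P * 'X * gp b N.+1) ^+ M) by move=> M; rewrite ew; apply: zzXexp.
have zB : forall M, zz M ((b%:P * 'X) ^+ M) by move=> M; rewrite eb; apply: zzXexp.
have zC : forall M, zz M (((a%:P + b%:P) * 'X) ^+ M) by move=> M; rewrite ec; apply: zzXexp.
apply: zz_mul_diff; last first.
  have zW1 := zW N.+1; have zB1 := zB N.+1; have zC1 := zC N.+1.
  rewrite (identB (A := a%:P) (B := b%:P) (Xv := 'X) (u := gp 1 N.+1 \Po (a%:P * 'X * gp b N.+1))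
     (W := (a%:P * 'X * gp b N.+1) ^+ N.+1) (Eb := (b%:P * 'X) ^+ N.+1)
     (Ec := ((a%:P + b%:P) * 'X) ^+ N.+1)).
  - by zzt.
  - by rewrite gp_comp; ring.
  - by rewrite r2; ring.
  - by rewrite r3; ring.
apply: zz_exp_diff; apply: zz_antideriv.
  have w0 : (a%:P * 'X * gp b N.+1)`_0 = 0 by rewrite -mulrA coefCM coefXM mulr0.
  rewrite !coefB !coef_scale -horner_coef0 horner_comp horner_coef0 w0 horner_coef0.
  by rewrite -polyCD coef_scale lp0 !mulr0 !subrr.
have d1 : (1 : {poly F})^`() = 0 by rewrite -polyC1 derivC.
rewrite !derivE !deriv_comp deriv_lp !derivE !mulr1 ?mul0r ?add0r.
have hv : (a%:P * 'X * gp b N.+1) ^+ N = 1 - (1 - a%:P * 'X * gp b N.+1) * (gp 1 N \Po (a%:P * 'X * gp b N.+1)).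
  by rewrite gp_comp; ring.
have hEb : (b%:P * 'X) ^+ N.+1 = 1 - (1 - b%:P * 'X) * gp b N.+1 by rewrite r2; ring.
have hEbd : ((b%:P * 'X) ^+ N.+1)^`() = b%:P * gp b N.+1 - (1 - b%:P * 'X) * (gp b N.+1)^`().
  rewrite hEb !derivE; ring.
have hFc : ((a%:P + b%:P) * 'X) ^+ N = 1 - (1 - (a%:P + b%:P) * 'X) * (gp 1 N \Po ((a%:P + b%:P) * 'X)).
  by rewrite gp_comp; ring.
have hFb : (b%:P * 'X) ^+ N = 1 - (1 - b%:P * 'X) * (gp 1 N \Po (b%:P * 'X)).
  by rewrite gp_comp; ring.
rewrite mul0r add0r.
apply: (zz_conv (identA hv hEb hEbd hFc hFb)).
have z1 := zW N; have z2 := zz_le (leqnSn N) (zB N.+1); have z3 := zz_deriv (zB N.+1).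
have z4 := zC N; have z5 := zB N.
by zzt.
Qed.



Lemma sum_ext_zero (F : numFieldType) (G : nat -> F) s t :
  (forall i, (s <= i)%N -> G i = 0) -> (s <= t)%N ->
  \sum_(i < t) G i = \sum_(i < s) G i.
Proof.
move=> hG hst; rewrite -!(big_mkord xpredT) (big_cat_nat (leq0n s) hst) /=.
rewrite [X in _ + X]big1_seq ?addr0 // => i /andP [_]; rewrite mem_index_iota.
by case/andP => h _; apply: hG.
Qed.

Lemma lhs_eq (F : numFieldType) (a b : F) m n :
  Ssum n a b m = ((lp F n \Po (a%:P * 'X * gp b n.+1)) ^+ m
            * ((gp 1 n.+1 \Po (a%:P * 'X * gp b n.+1)) * gp b n.+1))`_n.
Proof.
rewrite mulrA -rmorphXn -rmorphM /=.
set P := lp F n ^+ m * gp 1 n.+1.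
rewrite comp_polyE mulr_suml coef_sum.
pose G i := P`_i * (a ^+ i * (if (n < i)%N then 0 else ('C(n, i))%:R * b ^+ (n - i))).
rewrite (eq_bigr (fun i : 'I_(size P) => G i)); last first.
  move=> i _; rewrite /G -scalerAl coefZ exprMn exprMn -polyC_exp -mulrA -mulrA coefCM.
  rewrite -mulrA -exprSr coefXnM; case: ifP => // hi.
  by rewrite gb_pow ?leq_subr // subnK // leqNgt hi.
rewrite -(sum_ext_zero (s := size P) (t := maxn (size P) n.+1)); last first.
- exact: leq_maxl.
- by move=> i hi; rewrite /G nth_default // mul0r.
rewrite (sum_ext_zero (s := n.+1)); last first.
- exact: leq_maxr.
- by move=> i hi; rewrite /G hi mulr0 mulr0.
rewrite /Ssum; apply: eq_bigr => i _.
have hi : (i <= n)%N by rewrite -ltnS.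
rewrite /G /P H_coefN // ltnNge hi /=; ring.
Qed.



Lemma gp_scale (F : numFieldType) (x : F) M : gp x M = gp 1 M \Po (x%:P * 'X).
Proof.
apply/polyP => i; rewrite coef_scale !coef_gp expr1n.
by case: ifP; rewrite ?mulr1 ?mulr0.
Qed.

Lemma coefMnM (F : numFieldType) (p q : {poly F}) k i : (p *+ k * q)`_i = (p * q)`_i *+ k.
Proof. by rewrite mulrnAl coefMn. Qed.

Lemma rhs_eq (F : numFieldType) (a b : F) m n :
  (((lp F n \Po ((a + b)%:P * 'X)) - (lp F n \Po (b%:P * 'X))) ^+ m * gp (a + b) n.+1)`_n =
  \sum_(j < m.+1) ('C(m, j))%:R *
    \sum_(k < n.+1) Hmult F k j * (a + b) ^+ k
        * (((m - j)`!)%:R / ((n - k)`!)%:R)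
        * (-1) ^+ (n - k) * b ^+ (n - k) * (stirling1 (n - k) (m - j))%:~R.
Proof.
rewrite addrC exprDn mulr_suml coef_sum; apply: eq_bigr => j _.
rewrite coefMnM [RHS]mulr_natl; congr (_ *+ _).
rewrite -mulrA mulrC -rmorphXn -rmorphN -rmorphXn gp_scale -!rmorphM /= coefM.
apply: eq_bigr => k _.
have hk : (k <= n)%N by rewrite -ltnS.
rewrite !coef_scale H_coefN // stir ?leq_subr //; ring.
Qed.

Theorem theorem1 (C : numClosedFieldType) (a b : C) (m n : nat) :
  Ssum n a b m =
  \sum_(j < m.+1) ('C(m, j))%:R *
    \sum_(k < n.+1) Hmult C k j * (a + b) ^+ k
        * (((m - j)`!)%:R / ((n - k)`!)%:R)
        * (-1) ^+ (n - k) * b ^+ (n - k) * (stirling1 (n - k) (m - j))%:~R.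
Proof.
rewrite lhs_eq -rhs_eq; apply/eqP; rewrite -subr_eq0 -coefB; apply/eqP.
exact: main_zz.
Qed.
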